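(* Consider the five-node network with $\mathcal N=\{1,2,3,4,5\}$, $\mathcal E=\{(3,4),(2,4),(4,5),(1,5)\}$, observing nodes $\mathcal J=\{1,2,3\}$ and decision node $5$, and take the time-sharing variable $Q$ constant. For random variables with joint law $P_{X_1,X_2,X_3,Y}P_{U_1|X_1}P_{U_2|X_2}P_{U_3|X_3}$ (finite alphabets), the following are equivalent for a pair $(\Delta,C_{\rm sum})\in\mathbb R_+^2$: (i) $\Delta\le I(Y;U_1,U_2,U_3)$ and there exist $C_{15},C_{24},C_{34},C_{45}\ge0$ with $C_{15}+C_{24}+C_{34}+C_{45}=C_{\rm sum}$ and $R_1,R_2,R_3\ge0$ such that $C_{15}\ge R_1$, $C_{24}\ge R_2$, $C_{34}\ge R_3$, $C_{45}\ge R_2+R_3$, $R_1\ge I(U_1;X_1|U_2,U_3)$, $R_2\ge I(U_2;X_2|U_1,U_3)$, $R_3\ge I(U_3;X_3|U_1,U_2)$, $R_2+R_3\ge I(X_2,X_3;U_2,U_3|U_1)$, $R_1+R_3\ge I(X_1,X_3;U_1,U_3|U_2)$, $R_1+R_2\ge I(X_1,X_2;U_1,U_2|U_3)$, $R_1+R_2+R_3\ge I(X_1,X_2,X_3;U_1,U_2,U_3)$; (ii) $\Delta\le I(Y;U_1,U_2,U_3)$ and $C_{\rm sum}\ge I(X_1,X_2,X_3;U_1,U_2,U_3)+I(X_2,X_3;U_2,U_3|U_1)$. Consequently the region $\mathcal{RI}_{\rm sum}$ equals the union over all conditionals $P_{U_1|X_1},P_{U_2|X_2},P_{U_3|X_3}$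 of the pairs satisfying (ii).
   Context: $\mathcal{RI}_{\rm sum}$ denotes the set of pairs $(\Delta,C_{\rm sum})\in\mathbb R_+^2$ for which, for some conditionals $P_{U_1|X_1},P_{U_2|X_2},P_{U_3|X_3}$, condition (i) holds (this is the set of pairs for which the relevance given by the achievability result for general networks is attainable with some edge capacities of total sum $C_{\rm sum}$). All mutual informations are computed under the joint law $P_{X_1,X_2,X_3,Y}P_{U_1|X_1}P_{U_2|X_2}P_{U_3|X_3}$. *)

(* Defs.v *)
From HB Require Import structures.
From mathcomp Require Import all_boot all_order all_algebra.
From mathcomp Require Import reals exp.
Set Implicit Arguments. Unset Strict Implicit. Unset Printing Implicit Defensive.
Import Order.TTheory GRing.Theory Num.Theory.
Local Open Scope ring_scope.

Section InfoTheory.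
Variable R : realType.

Definition is_pmf (T : finType) (p : T -> R) : Prop :=
  (forall t, 0 <= p t) /\ \sum_(t : T) p t = 1.

Definition is_kernel (X U : finType) (W : X -> U -> R) : Prop :=
  forall x, is_pmf (W x).

Definition law (Om T : finType) (p : Om -> R) (f : Om -> T) (t : T) : R :=
  \sum_(w : Om | f w == t) p w.

(* Shannon entropy (natural log; 0 ln 0 = 0 holds since the term is 0 * _). *)
Definition entropy (Om T : finType) (p : Om -> R) (f : Om -> T) : R :=
  - \sum_(t : T) law p f t * ln (law p f t).

Definition cmi (Om A B C : finType) (p : Om -> R)
  (a : Om -> A) (b : Om -> B) (c : Om -> C) : R :=
  entropy p (fun w => (a w, c w)) + entropy p (fun w => (b w, c w))
  - entropy p (fun w => (a w, b w, c w)) - entropy p c.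

Definition mi (Om A B : finType) (p : Om -> R) (a : Om -> A) (b : Om -> B) : R :=
  cmi p a b (fun _ => tt).

End InfoTheory.

Section Network.
Variables (R : realType) (X1 X2 X3 Y U1 U2 U3 : finType).

Definition Om : finType := (X1 * X2 * X3 * Y * U1 * U2 * U3)%type.

Definition jointLaw (P : X1 * X2 * X3 * Y -> R)
  (W1 : X1 -> U1 -> R) (W2 : X2 -> U2 -> R) (W3 : X3 -> U3 -> R) (w : Om) : R :=
  let: (x1, x2, x3, y, u1, u2, u3) := w in
  P (x1, x2, x3, y) * W1 x1 u1 * W2 x2 u2 * W3 x3 u3.

Definition vX1 (w : Om) : X1 := w.1.1.1.1.1.1.
Definition vX2 (w : Om) : X2 := w.1.1.1.1.1.2.
Definition vX3 (w : Om) : X3 := w.1.1.1.1.2.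
Definition vY  (w : Om) : Y  := w.1.1.1.2.
Definition vU1 (w : Om) : U1 := w.1.1.2.
Definition vU2 (w : Om) : U2 := w.1.2.
Definition vU3 (w : Om) : U3 := w.2.

Variables (P : X1 * X2 * X3 * Y -> R)
  (W1 : X1 -> U1 -> R) (W2 : X2 -> U2 -> R) (W3 : X3 -> U3 -> R).

Let p := jointLaw P W1 W2 W3.

Definition cond_i (Delta Csum : R) : Prop :=
  Delta <= mi p vY (fun w => (vU1 w, vU2 w, vU3 w)) /\
  exists C15 C24 C34 C45 R1 R2 R3 : R,
    [/\ 0 <= C15, 0 <= C24, 0 <= C34, 0 <= C45 &
        C15 + C24 + C34 + C45 = Csum] /\
    [/\ 0 <= R1, 0 <= R2 & 0 <= R3] /\
    [/\ C15 >= R1, C24 >= R2, C34 >= R3 & C45 >= R2 + R3] /\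
    [/\ R1 >= cmi p vU1 vX1 (fun w => (vU2 w, vU3 w)),
        R2 >= cmi p vU2 vX2 (fun w => (vU1 w, vU3 w)) &
        R3 >= cmi p vU3 vX3 (fun w => (vU1 w, vU2 w))] /\
    [/\ R2 + R3 >= cmi p (fun w => (vX2 w, vX3 w)) (fun w => (vU2 w, vU3 w)) vU1,
        R1 + R3 >= cmi p (fun w => (vX1 w, vX3 w)) (fun w => (vU1 w, vU3 w)) vU2,
        R1 + R2 >= cmi p (fun w => (vX1 w, vX2 w)) (fun w => (vU1 w, vU2 w)) vU3 &
        R1 + R2 + R3 >= mi p (fun w => (vX1 w, vX2 w, vX3 w))
                             (fun w => (vU1 w, vU2 w, vU3 w))].

Definition cond_ii (Delta Csum : R) : Prop :=
  Delta <= mi p vY (fun w => (vU1 w, vU2 w, vU3 w)) /\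
  Csum >= mi p (fun w => (vX1 w, vX2 w, vX3 w)) (fun w => (vU1 w, vU2 w, vU3 w))
          + cmi p (fun w => (vX2 w, vX3 w)) (fun w => (vU2 w, vU3 w)) vU1.

End Network.

Definition RI_sum (R : realType) (X1 X2 X3 Y : finType)
  (P : X1 * X2 * X3 * Y -> R) (DC : R * R) : Prop :=
  0 <= DC.1 /\ 0 <= DC.2 /\
  exists (U1 U2 U3 : finType) (W1 : X1 -> U1 -> R) (W2 : X2 -> U2 -> R)
         (W3 : X3 -> U3 -> R),
    [/\ is_kernel W1, is_kernel W2, is_kernel W3 &
        cond_i P W1 W2 W3 DC.1 DC.2].

Definition RII_sum (R : realType) (X1 X2 X3 Y : finType)
  (P : X1 * X2 * X3 * Y -> R) (DC : R * R) : Prop :=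
  0 <= DC.1 /\ 0 <= DC.2 /\
  exists (U1 U2 U3 : finType) (W1 : X1 -> U1 -> R) (W2 : X2 -> U2 -> R)
         (W3 : X3 -> U3 -> R),
    [/\ is_kernel W1, is_kernel W2, is_kernel W3 &
        cond_ii P W1 W2 W3 DC.1 DC.2].

(* Main.v *)
Require Import Defs.
From HB Require Import structures.
From mathcomp Require Import all_boot all_order all_algebra.
From mathcomp Require Import reals exp.
From mathcomp Require Import ring lra.
From Stdlib Require Import FunctionalExtensionality PropExtensionality.
Import Order.TTheory GRing.Theory Num.Theory.
Set Implicit Arguments. Unset Strict Implicit.
Local Open Scope ring_scope.

Section Gen.
Variable R : realType.

Lemma ln_le_sub1 (x : R) : 0 < x -> ln x <= x - 1.
Proof. by move=> x0; rewrite lerBrDl; have := expR_ge1Dx (ln x); rewrite lnK. Qed.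

Variables (T : finType) (p : T -> R).

Lemma lawE (S : finType) (f : T -> S) t : law p f t = \sum_w p w * (f w == t)%:R.
Proof. rewrite /law big_mkcond; apply: eq_bigr => w _; case: eqP => _; rewrite ?mulr1 ?mulr0 //. Qed.

Lemma sum_law (S : finType) (f : T -> S) (F : S -> R) :
  \sum_t law p f t * F t = \sum_w p w * F (f w).
Proof.
under eq_bigr do rewrite lawE big_distrl /=.
rewrite exchange_big /=; apply: eq_bigr => w _.
rewrite (bigD1 (f w)) //= eqxx mulr1 big1 ?addr0 // => t /negbTE.
by rewrite eq_sym => ->; rewrite mulr0 mul0r.
Qed.

Lemma entropyE (S : finType) (f : T -> S) :
  entropy p f = - \sum_w p w * ln (law p f (f w)).
Proof. by rewrite /entropy sum_law. Qed.

Lemma law_relabel (S S' : finType) (f : T -> S) (g : T -> S') w :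
  (forall w w', (f w' == f w) = (g w' == g w)) -> law p f (f w) = law p g (g w).
Proof. by move=> H; rewrite /law; apply: eq_bigl => w'; rewrite H. Qed.

Lemma entropy_relabel (S S' : finType) (f : T -> S) (g : T -> S') :
  (forall w w', (f w' == f w) = (g w' == g w)) -> entropy p f = entropy p g.
Proof. by move=> H; rewrite !entropyE; congr (- _); apply: eq_bigr => w _; rewrite (law_relabel _ H). Qed.

Hypothesis hp : is_pmf p.

Lemma law_ge (S : finType) (f : T -> S) w : p w <= law p f (f w).
Proof.
rewrite /law (bigD1 w) //= lerDl; apply: sumr_ge0 => i _; exact: hp.1.
Qed.

Lemma law_ge0 (S : finType) (f : T -> S) t : 0 <= law p f t.
Proof. apply: sumr_ge0 => i _; exact: hp.1. Qed.

Lemma sum_law1 (S : finType) (f : T -> S) : \sum_t law p f t = 1.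
Proof. by have := sum_law f (fun _ => 1); under eq_bigr do rewrite mulr1; under [X in _ = X -> _]eq_bigr do rewrite mulr1; move=> ->; exact: hp.2. Qed.

Lemma marg (A C : finType) (a : T -> A) (c : T -> C) z :
  \sum_x law p (fun w => (a w, c w)) (x, z) = law p c z.
Proof.
under eq_bigr do rewrite lawE.
rewrite exchange_big lawE /=; apply: eq_bigr => w _.
rewrite -big_distrr /=; congr (_ * _).
rewrite (bigD1 (a w)) //= big1 ?addr0; first by rewrite xpair_eqE eqxx.
by move=> x /negbTE; rewrite xpair_eqE eq_sym => ->.
Qed.


Lemma cmi_ge0 (A B C : finType) (a : T -> A) (b : T -> B) (c : T -> C) :
  0 <= cmi p a b c.
Proof.
set Lac := law p (fun w => (a w, c w)).
set Lbc := law p (fun w => (b w, c w)).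
set Labc := law p (fun w => (a w, b w, c w)).
set Lc := law p c.
pose G (t : A * B * C) := Lac (t.1.1, t.2) * Lbc (t.1.2, t.2) / (Labc t * Lc t.2).
have E : cmi p a b c = - \sum_w p w * (ln (Lac (a w, c w)) + ln (Lbc (b w, c w))
            - ln (Labc (a w, b w, c w)) - ln (Lc (c w))).
  rewrite /cmi !entropyE.
  under [X in _ = - X]eq_bigr do rewrite !mulrDr !mulrN.
  rewrite !big_split /= !sumrN; ring.
have step1 : \sum_w p w * (ln (Lac (a w, c w)) + ln (Lbc (b w, c w))
            - ln (Labc (a w, b w, c w)) - ln (Lc (c w)))
         <= \sum_w p w * (G (a w, b w, c w) - 1).
  apply: ler_sum => w _.
  have [pw0|pwpos] := eqVneq (p w) 0; first by rewrite pw0 !mul0r.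
  have pw : 0 < p w by rewrite lt_def pwpos hp.1.
  have h1 : 0 < Lac (a w, c w) by apply: lt_le_trans pw (law_ge _ _).
  have h2 : 0 < Lbc (b w, c w) by apply: lt_le_trans pw (law_ge _ _).
  have h3 : 0 < Labc (a w, b w, c w) by apply: lt_le_trans pw (law_ge _ _).
  have h4 : 0 < Lc (c w) by apply: lt_le_trans pw (law_ge _ _).
  apply: ler_wpM2l; first exact: ltW.
  rewrite /G /=.
  have -> : ln (Lac (a w, c w)) + ln (Lbc (b w, c w)) - ln (Labc (a w, b w, c w)) - ln (Lc (c w))
     = ln (Lac (a w, c w) * Lbc (b w, c w) / (Labc (a w, b w, c w) * Lc (c w))).
    rewrite ln_div ?posrE ?mulr_gt0 // !lnM ?posrE //; by rewrite opprD addrA.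
  by apply: ln_le_sub1; rewrite divr_gt0 ?mulr_gt0.
have step2 : \sum_w p w * (G (a w, b w, c w) - 1) = \sum_t Labc t * G t - 1.
  under eq_bigr do rewrite mulrBr mulr1.
  by rewrite sumrB hp.2 -(sum_law (fun w => (a w, b w, c w)) G).
have step3 : \sum_t Labc t * G t <= \sum_t Lac (t.1.1, t.2) * Lbc (t.1.2, t.2) / Lc t.2.
  apply: ler_sum => t _; rewrite /G.
  have [->|nz] := eqVneq (Labc t) 0; first by rewrite mul0r divr_ge0 ?mulr_ge0 ?law_ge0.
  by rewrite invfM mulrCA mulVKf.
have step4 : \sum_t Lac (t.1.1, t.2) * Lbc (t.1.2, t.2) / Lc t.2 = 1.
  rewrite -(pair_bigA _ (fun ab z => Lac (ab.1, z) * Lbc (ab.2, z) / Lc z)) /=.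
  rewrite -(pair_bigA _ (fun x y => \sum_z Lac (x, z) * Lbc (y, z) / Lc z)) /=.
  under eq_bigr do rewrite exchange_big /=.
  rewrite exchange_big /= -(sum_law1 c); apply: eq_bigr => z _.
  under eq_bigr => x _ do rewrite -big_distrl -big_distrr /= (marg b c z).
  rewrite -big_distrl -big_distrl /= (marg a c z).
  rewrite -/(Lc z); have [->|nz] := eqVneq (Lc z) 0; first by rewrite !mul0r.
  by rewrite mulfK.
rewrite E oppr_ge0; apply: (le_trans step1); rewrite step2 subr_le0 -step4; exact: step3.
Qed.

End Gen.

Section Markov.
Variable R : realType.

Lemma sum_pair (I J : finType) (F : I * J -> R) : \sum_w F w = \sum_i \sum_j F (i, j).
Proof. by rewrite pair_bigA; apply: eq_bigr => -[i j] _. Qed.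

Lemma entropy_reindex (T T' S : finType) (e : T' -> T) (p : T -> R) (f : T -> S) :
  bijective e -> entropy p f = entropy (fun w => p (e w)) (fun w => f (e w)).
Proof.
move=> be; rewrite /entropy; congr (- _); apply: eq_bigr => t _.
suff -> : law (fun w => p (e w)) (fun w => f (e w)) t = law p f t by [].
by rewrite /law (reindex e) //; exact: onW_bij.
Qed.

Variables (Z V X S : finType) (q : Z -> R) (K : X -> V -> R) (xz : Z -> X).
Hypotheses (hq : forall z, 0 <= q z) (hK : is_kernel K).
Variable p : Z * V -> R.
Hypothesis hpe : forall w, p w = q w.1 * K (xz w.1) w.2.
Variable f : Z * V -> S.
Hypotheses (hf : forall z v v', f (z, v) = f (z, v'))
  (hx : forall w w', f w = f w' -> xz w.1 = xz w'.1).

Lemma markov_law w :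
  law p (fun w => (w.2, f w)) (w.2, f w) = K (xz w.1) w.2 * law p f (f w).
Proof.
rewrite !lawE !sum_pair /= big_distrr /=; apply: eq_bigr => z _.
rewrite (bigD1 w.2) //= big1 ?addr0; last first.
  by move=> v /negbTE nv; rewrite xpair_eqE nv /= mulr0.
under [X in _ = _ * X]eq_bigr do rewrite (hf z _ w.2).
rewrite xpair_eqE eqxx /=.
under [X in _ = _ * X]eq_bigr do rewrite hpe /= -mulrA [K _ _ * _]mulrC mulrA.
rewrite -big_distrr /= (hK _).2 mulr1 hpe /=.
case: eqP => [/hx /= ->|_]; last by rewrite !mulr0.
by rewrite !mulr1 mulrC.
Qed.

Lemma markov_entropy :
  entropy p (fun w => (w.2, f w)) = entropy p f - \sum_w p w * ln (K (xz w.1) w.2).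
Proof.
rewrite !entropyE -opprD -big_split /=; congr (- _); apply: eq_bigr => w _.
rewrite markov_law -mulrDr.
have [pw0|pwnz] := eqVneq (p w) 0; first by rewrite pw0 !mul0r.
have hp1 : forall w, 0 <= p w by move=> w'; rewrite hpe mulr_ge0 ?hq ?(hK _).1.
have pw : 0 < p w by rewrite lt_def pwnz hp1.
have Kpos : 0 < K (xz w.1) w.2.
  rewrite lt_def (hK _).1 andbT; apply: contra pwnz => /eqP k0.
  by rewrite hpe k0 mulr0.
have Lpos : 0 < law p f (f w).
  apply: lt_le_trans pw _; rewrite /law (bigD1 w) //= lerDl.
  by apply: sumr_ge0 => i _; exact: hp1.
by rewrite lnM ?posrE // addrC.
Qed.

End Markov.

Lemma sum_kernel (R : realType) (Z V X : finType) (q : Z -> R) (K : X -> V -> R) (xz : Z -> X)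
  (hK : is_kernel K) (F : Z * V -> R) :
  (forall w, F w = q w.1 * K (xz w.1) w.2) -> \sum_w F w = \sum_z q z.
Proof.
move=> hF; rewrite sum_pair; apply: eq_bigr => z _.
under eq_bigr do rewrite hF /=.
by rewrite -big_distrr /= (hK _).2 mulr1.
Qed.

Lemma eqNone (T : eqType) : (None == None :> option T) = true.
Proof. by []. Qed.

Lemma eqSome (T : eqType) (x y : T) : (Some x == Some y) = (x == y).
Proof. by []. Qed.

Lemma arith2 (R : realType) (Hf : bool -> bool -> bool -> bool -> bool -> bool -> R)
  (c1 c2 c3 Csum T B23 A1 A2 A3 B13 B12 I1 I2 I3 I4 : R) :
  T = (Hf true true true false false false) + (Hf false false false true true true) - (Hf true true true true true true) - (Hf false false false false false false) ->
  B23 = (Hf false true true true false false) + (Hf false false false true true true) - (Hf false true true true true true) - (Hf false false false true false false) ->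
  A1 = (Hf false false false true true true) + (Hf true false false false true true) - (Hf true false false true true true) - (Hf false false false false true true) ->
  A2 = (Hf false false false true true true) + (Hf false true false true false true) - (Hf false true false true true true) - (Hf false false false true false true) ->
  A3 = (Hf false false false true true true) + (Hf false false true true true false) - (Hf false false true true true true) - (Hf false false false true true false) ->
  B13 = (Hf true false true false true false) + (Hf false false false true true true) - (Hf true false true true true true) - (Hf false false false false true false) ->
  B12 = (Hf true true false false false true) + (Hf false false false true true true) - (Hf true true false true true true) - (Hf false false false false false true) ->
  I1 = (Hf false false false true false false) + (Hf false false false false true true) - (Hf false false false true true true) - (Hf false false false false false false) ->
  I2 = (Hf false false false true true false) + (Hf false false false true false true) - (Hf false false false true true true) - (Hf false false false true false false) ->
  I3 = (Hf false false false true false false) + (Hf false false false false true false) - (Hf false false false true true false) - (Hf false false false false false false) ->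
  I4 = (Hf false false false true true false) + (Hf false false false false false true) - (Hf false false false true true true) - (Hf false false false false false false) ->
  (Hf true true true true true true) = (Hf true true true false true true) - c1 ->
  (Hf true true true false true true) = (Hf true true true false false true) - c2 ->
  (Hf true true true false false true) = (Hf true true true false false false) - c3 ->
  (Hf false true true true true true) = (Hf false true true true false true) - c2 ->
  (Hf false true true true false true) = (Hf false true true true false false) - c3 ->
  (Hf true false false true true true) = (Hf true false false false true true) - c1 ->
  (Hf false true false true true true) = (Hf false true false true false true) - c2 ->
  (Hf false false true true true true) = (Hf false false true true true false) - c3 ->
  (Hf true false true true true true) = (Hf true false true false true true) - c1 ->
  (Hf true false true false true true) = (Hf true false true false true false) - c3 ->
  (Hf true true false true true true) = (Hf true true false false true true) - c1 ->
  (Hf true true false false true true) = (Hf true true false false false true) - c2 ->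
  0 <= I1 -> 0 <= I2 -> 0 <= I3 -> 0 <= I4 -> 0 <= A1 -> 0 <= A2 -> 0 <= A3 ->
  Csum >= T + B23 ->
  exists C15 C24 C34 C45 R1 R2 R3 : R,
    [/\ 0 <= C15, 0 <= C24, 0 <= C34, 0 <= C45 & C15 + C24 + C34 + C45 = Csum] /\
    [/\ 0 <= R1, 0 <= R2 & 0 <= R3] /\
    [/\ C15 >= R1, C24 >= R2, C34 >= R3 & C45 >= R2 + R3] /\
    [/\ R1 >= A1, R2 >= A2 & R3 >= A3] /\
    [/\ R2 + R3 >= B23, R1 + R3 >= B13, R1 + R2 >= B12 & R1 + R2 + R3 >= T].
Proof.
move=> eT eB23 eA1 eA2 eA3 eB13 eB12 eI1 eI2 eI3 eI4 m0 m1 m2 m3 m4 m5 m6 m7 m8 m9 m10 m11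
  gI1 gI2 gI3 gI4 gA1 gA2 gA3 hC.
have F2 : A1 <= T - B23 by lra.
have F3 : A2 + A3 <= B23 by lra.
have F4 : B13 <= T - B23 + A3 by lra.
have F5 : B12 <= T - A3 by lra.
clear eT eB23 eA1 eA2 eA3 eB13 eB12 eI1 eI2 eI3 eI4 m0 m1 m2 m3 m4 m5 m6 m7 m8 m9 m10 m11.
exists (T - B23), (B23 - A3), A3, (Csum - T), (T - B23), (B23 - A3), A3.
split; first (split; lra).
split; first (split; lra).
split; first (split; lra).
split; first (split; lra).
split; lra.
Qed.

Section Net.
Variables (R : realType) (X1 X2 X3 Y U1 U2 U3 : finType) (P : X1 * X2 * X3 * Y -> R)
  (W1 : X1 -> U1 -> R) (W2 : X2 -> U2 -> R) (W3 : X3 -> U3 -> R).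
Hypotheses (hP : is_pmf P) (hW1 : is_kernel W1) (hW2 : is_kernel W2) (hW3 : is_kernel W3).
Local Notation Om := (Om X1 X2 X3 Y U1 U2 U3).
Local Notation p := (jointLaw P W1 W2 W3).

Definition q2 (b : X1 * X2 * X3 * Y * U1) := P b.1 * W1 b.1.1.1.1 b.2.
Definition q3 (a : X1 * X2 * X3 * Y * U1 * U2) := q2 a.1 * W2 a.1.1.1.1.2 a.2.

Lemma p_ge0 w : 0 <= p w.
Proof.
case: w => [[[[[[x1 x2] x3] y] u1] u2] u3] /=.
by rewrite !mulr_ge0 ?hP.1 ?(hW1 _).1 ?(hW2 _).1 ?(hW3 _).1.
Qed.

Lemma p_pmf : is_pmf p.
Proof.
split; first exact: p_ge0.
rewrite (@sum_kernel _ _ _ _ q3 W3 (fun a => a.1.1.1.2)) //; last first.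
  by case=> [[[[[[x1 x2] x3] y] u1] u2] u3].
rewrite (@sum_kernel _ _ _ _ q2 W2 (fun a => a.1.1.1.2)) //.
rewrite (@sum_kernel _ _ _ _ P W1 (fun a => a.1.1.1)) //.
exact: hP.2.
Qed.

Definition set1 (w : Om) (u : U1) : Om := (((w.1.1.1, u), w.1.2), w.2).
Definition set2 (w : Om) (u : U2) : Om := ((w.1.1, u), w.2).
Definition set3 (w : Om) (u : U3) : Om := (w.1, u).

Definition c1 := \sum_w p w * ln (W1 (vX1 w) (vU1 w)).
Definition c2 := \sum_w p w * ln (W2 (vX2 w) (vU2 w)).
Definition c3 := \sum_w p w * ln (W3 (vX3 w) (vU3 w)).

Definition e1 (w : X1 * X2 * X3 * Y * U2 * U3 * U1) : Om :=
  (((w.1.1.1, w.2), w.1.1.2), w.1.2).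
Definition e1inv (w : Om) : X1 * X2 * X3 * Y * U2 * U3 * U1 :=
  (((w.1.1.1, w.1.2), w.2), w.1.1.2).
Lemma bij_e1 : bijective e1.
Proof. by exists e1inv => -[[[a b] c] d]. Qed.
Definition q1' (z : X1 * X2 * X3 * Y * U2 * U3) :=
  P z.1.1 * W2 z.1.1.1.1.2 z.1.2 * W3 z.1.1.1.2 z.2.

Lemma mk1 (S : finType) (f : Om -> S) :
  (forall w u, f (set1 w u) = f w) -> (forall w w', f w = f w' -> vX1 w = vX1 w') ->
  entropy p (fun w => (vU1 w, f w)) = entropy p f - c1.
Proof.
move=> hf hx.
rewrite (entropy_reindex (e:=e1) p (fun w => (vU1 w, f w)) bij_e1).
rewrite (entropy_reindex (e:=e1) p f bij_e1).
have hq : forall z, 0 <= q1' z.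
  by move=> z; rewrite !mulr_ge0 ?hP.1 ?(hW2 _).1 ?(hW3 _).1.
have hpe : forall w, p (e1 w) = q1' w.1 * W1 (w.1.1.1.1.1.1) w.2.
  by case=> [[[[[[x1 x2] x3] y] u2] u3] u1] /=; rewrite /q1' /=; ring.
have hf' : forall z v v', f (e1 (z, v)) = f (e1 (z, v')).
  by move=> z v v'; rewrite -(hf (e1 (z, v)) v').
have hx' : forall w w', f (e1 w) = f (e1 w') -> w.1.1.1.1.1.1 = w'.1.1.1.1.1.1.
  move=> w w' E; exact: (hx _ _ E).
have := markov_entropy (q:=q1') (K:=W1) (xz:=fun z => z.1.1.1.1.1) hq hW1 hpe hf' hx'.
have hc : \sum_w p (e1 w) * ln (W1 w.1.1.1.1.1.1 w.2) = c1.
  by rewrite /c1 (reindex e1) //; exact: (onW_bij _ bij_e1).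
by rewrite -hc.
Qed.

Definition e2 (w : X1 * X2 * X3 * Y * U1 * U3 * U2) : Om :=
  ((w.1.1, w.2), w.1.2).
Definition e2inv (w : Om) : X1 * X2 * X3 * Y * U1 * U3 * U2 :=
  ((w.1.1, w.2), w.1.2).
Lemma bij_e2 : bijective e2.
Proof. by exists e2inv => -[[[a b] c] d]. Qed.
Definition q2' (z : X1 * X2 * X3 * Y * U1 * U3) :=
  P z.1.1 * W1 z.1.1.1.1.1 z.1.2 * W3 z.1.1.1.2 z.2.

Lemma mk2 (S : finType) (f : Om -> S) :
  (forall w u, f (set2 w u) = f w) -> (forall w w', f w = f w' -> vX2 w = vX2 w') ->
  entropy p (fun w => (vU2 w, f w)) = entropy p f - c2.
Proof.
move=> hf hx.
rewrite (entropy_reindex (e:=e2) p (fun w => (vU2 w, f w)) bij_e2).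
rewrite (entropy_reindex (e:=e2) p f bij_e2).
have hq : forall z, 0 <= q2' z.
  by move=> z; rewrite !mulr_ge0 ?hP.1 ?(hW1 _).1 ?(hW3 _).1.
have hpe : forall w, p (e2 w) = q2' w.1 * W2 (w.1.1.1.1.1.2) w.2.
  by case=> [[[[[[x1 x2] x3] y] u1] u3] u2] /=; rewrite /q2' /=; ring.
have hf' : forall z v v', f (e2 (z, v)) = f (e2 (z, v')).
  by move=> z v v'; rewrite -(hf (e2 (z, v)) v').
have hx' : forall w w', f (e2 w) = f (e2 w') -> w.1.1.1.1.1.2 = w'.1.1.1.1.1.2.
  move=> w w' E; exact: (hx _ _ E).
have := markov_entropy (q:=q2') (K:=W2) (xz:=fun z => z.1.1.1.1.2) hq hW2 hpe hf' hx'.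
have hc : \sum_w p (e2 w) * ln (W2 w.1.1.1.1.1.2 w.2) = c2.
  by rewrite /c2 (reindex e2) //; exact: (onW_bij _ bij_e2).
by rewrite -hc.
Qed.

Lemma mk3 (S : finType) (f : Om -> S) :
  (forall w u, f (set3 w u) = f w) -> (forall w w', f w = f w' -> vX3 w = vX3 w') ->
  entropy p (fun w => (vU3 w, f w)) = entropy p f - c3.
Proof.
move=> hf hx.
have hq : forall z, 0 <= q3 z.
  by move=> z; rewrite /q3 /q2 !mulr_ge0 ?hP.1 ?(hW1 _).1 ?(hW2 _).1.
have hpe : forall w : Om, p w = q3 w.1 * W3 (w.1.1.1.1.2) w.2.
  by case=> [[[[[[x1 x2] x3] y] u1] u2] u3] /=; rewrite /q3 /q2 /=.
have hf' : forall z v v', f (z, v) = f (z, v').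
  by move=> z v v'; rewrite -(hf (z, v) v').
have hx' : forall w w' : Om, f w = f w' -> w.1.1.1.1.2 = w'.1.1.1.1.2.
  move=> w w' E; exact: (hx _ _ E).
exact: (markov_entropy (q:=q3) (K:=W3) (xz:=fun z => z.1.1.1.2) hq hW3 hpe hf' hx').
Qed.


Definition canon (b1 b2 b3 b4 b5 b6 : bool) (w : Om) :=
  (if b1 then Some (vX1 w) else None, if b2 then Some (vX2 w) else None,
   if b3 then Some (vX3 w) else None, if b4 then Some (vU1 w) else None,
   if b5 then Some (vU2 w) else None, if b6 then Some (vU3 w) else None).
Local Notation H b1 b2 b3 b4 b5 b6 := (entropy p (canon b1 b2 b3 b4 b5 b6)).
Ltac rl := move=> w w'; rewrite /canon /= ?xpair_eqE /= ?eqSome ?eqNone ?eqxx ?andbT; try done; by do ![case: eqP => _ /=].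

Lemma MK1 b2 b3 b5 b6 : H true b2 b3 true b5 b6 = H true b2 b3 false b5 b6 - c1.
Proof.
rewrite -mk1 //; last by move=> w w' /(congr1 (fun t => t.1.1.1.1.1)) [] ->.
by apply: entropy_relabel; case: b2; case: b3; case: b5; case: b6; rl.
Qed.
Lemma MK2 b1 b3 b4 b6 : H b1 true b3 b4 true b6 = H b1 true b3 b4 false b6 - c2.
Proof.
rewrite -mk2 //; last by move=> w w' /(congr1 (fun t => t.1.1.1.1.2)) [] ->.
by apply: entropy_relabel; case: b1; case: b3; case: b4; case: b6; rl.
Qed.
Lemma MK3 b1 b2 b4 b5 : H b1 b2 true b4 b5 true = H b1 b2 true b4 b5 false - c3.
Proof.
rewrite -mk3 //; last by move=> w w' /(congr1 (fun t => t.1.1.1.2)) [] ->.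
by apply: entropy_relabel; case: b1; case: b2; case: b4; case: b5; rl.
Qed.

Lemma equiv_i_ii Delta Csum : cond_i P W1 W2 W3 Delta Csum <-> cond_ii P W1 W2 W3 Delta Csum.
Proof.
have hp := p_pmf.
split.
  move=> [hD [C15 [C24 [C34 [C45 [R1 [R2 [R3 [[h1 h2 h3 h4 hs] [[r1 r2 r3]
     [[k1 k2 k3 k4] [[a1 a2 a3] [b1 b2 b3 b4]]]]]]]]]]]]].
  split => //; lra.
move=> [hD hC]; split => //.
have eT : mi p (fun w => (vX1 w, vX2 w, vX3 w)) (fun w => (vU1 w, vU2 w, vU3 w)) = (H true true true false false false) + (H false false false true true true) - (H true true true true true true) - (H false false false false false false).
  rewrite /mi /cmi; congr (_ + _ - _ - _); apply: entropy_relabel; rl.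
have eB23 : cmi p (fun w => (vX2 w, vX3 w)) (fun w => (vU2 w, vU3 w)) (@vU1 X1 X2 X3 Y U1 U2 U3) = (H false true true true false false) + (H false false false true true true) - (H false true true true true true) - (H false false false true false false).
  rewrite /mi /cmi; congr (_ + _ - _ - _); apply: entropy_relabel; rl.
have eA1 : cmi p (@vU1 X1 X2 X3 Y U1 U2 U3) (@vX1 X1 X2 X3 Y U1 U2 U3) (fun w => (vU2 w, vU3 w)) = (H false false false true true true) + (H true false false false true true) - (H true false false true true true) - (H false false false false true true).
  rewrite /mi /cmi; congr (_ + _ - _ - _); apply: entropy_relabel; rl.
have eA2 : cmi p (@vU2 X1 X2 X3 Y U1 U2 U3) (@vX2 X1 X2 X3 Y U1 U2 U3) (fun w => (vU1 w, vU3 w)) = (H false false false true true true) + (H false true false true false true) - (H false true false true true true) - (H false false false true false true).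
  rewrite /mi /cmi; congr (_ + _ - _ - _); apply: entropy_relabel; rl.
have eA3 : cmi p (@vU3 X1 X2 X3 Y U1 U2 U3) (@vX3 X1 X2 X3 Y U1 U2 U3) (fun w => (vU1 w, vU2 w)) = (H false false false true true true) + (H false false true true true false) - (H false false true true true true) - (H false false false true true false).
  rewrite /mi /cmi; congr (_ + _ - _ - _); apply: entropy_relabel; rl.
have eB13 : cmi p (fun w => (vX1 w, vX3 w)) (fun w => (vU1 w, vU3 w)) (@vU2 X1 X2 X3 Y U1 U2 U3) = (H true false true false true false) + (H false false false true true true) - (H true false true true true true) - (H false false false false true false).
  rewrite /mi /cmi; congr (_ + _ - _ - _); apply: entropy_relabel; rl.
have eB12 : cmi p (fun w => (vX1 w, vX2 w)) (fun w => (vU1 w, vU2 w)) (@vU3 X1 X2 X3 Y U1 U2 U3) = (H true true false false false true) + (H false false false true true true) - (H true true false true true true) - (H false false false false false true).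
  rewrite /mi /cmi; congr (_ + _ - _ - _); apply: entropy_relabel; rl.
have eI1 : mi p (@vU1 X1 X2 X3 Y U1 U2 U3) (fun w => (vU2 w, vU3 w)) = (H false false false true false false) + (H false false false false true true) - (H false false false true true true) - (H false false false false false false).
  rewrite /mi /cmi; congr (_ + _ - _ - _); apply: entropy_relabel; rl.
have eI2 : cmi p (@vU2 X1 X2 X3 Y U1 U2 U3) (@vU3 X1 X2 X3 Y U1 U2 U3) (@vU1 X1 X2 X3 Y U1 U2 U3) = (H false false false true true false) + (H false false false true false true) - (H false false false true true true) - (H false false false true false false).
  rewrite /mi /cmi; congr (_ + _ - _ - _); apply: entropy_relabel; rl.
have eI3 : mi p (@vU1 X1 X2 X3 Y U1 U2 U3) (@vU2 X1 X2 X3 Y U1 U2 U3) = (H false false false true false false) + (H false false false false true false) - (H false false false true true false) - (H false false false false false false).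
  rewrite /mi /cmi; congr (_ + _ - _ - _); apply: entropy_relabel; rl.
have eI4 : mi p (fun w => (vU1 w, vU2 w)) (@vU3 X1 X2 X3 Y U1 U2 U3) = (H false false false true true false) + (H false false false false false true) - (H false false false true true true) - (H false false false false false false).
  rewrite /mi /cmi; congr (_ + _ - _ - _); apply: entropy_relabel; rl.
have gI1 : 0 <= mi p (@vU1 X1 X2 X3 Y U1 U2 U3) (fun w => (vU2 w, vU3 w)) := cmi_ge0 hp _ _ _.
have gI2 : 0 <= cmi p (@vU2 X1 X2 X3 Y U1 U2 U3) (@vU3 X1 X2 X3 Y U1 U2 U3) (@vU1 X1 X2 X3 Y U1 U2 U3) := cmi_ge0 hp _ _ _.
have gI3 : 0 <= mi p (@vU1 X1 X2 X3 Y U1 U2 U3) (@vU2 X1 X2 X3 Y U1 U2 U3) := cmi_ge0 hp _ _ _.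
have gI4 : 0 <= mi p (fun w => (vU1 w, vU2 w)) (@vU3 X1 X2 X3 Y U1 U2 U3) := cmi_ge0 hp _ _ _.
have gA1 : 0 <= cmi p (@vU1 X1 X2 X3 Y U1 U2 U3) (@vX1 X1 X2 X3 Y U1 U2 U3) (fun w => (vU2 w, vU3 w)) := cmi_ge0 hp _ _ _.
have gA2 : 0 <= cmi p (@vU2 X1 X2 X3 Y U1 U2 U3) (@vX2 X1 X2 X3 Y U1 U2 U3) (fun w => (vU1 w, vU3 w)) := cmi_ge0 hp _ _ _.
have gA3 : 0 <= cmi p (@vU3 X1 X2 X3 Y U1 U2 U3) (@vX3 X1 X2 X3 Y U1 U2 U3) (fun w => (vU1 w, vU2 w)) := cmi_ge0 hp _ _ _.
have m0 := MK1 true true true true.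
have m1 := MK2 true true false true.
have m2 := MK3 true true false false.
have m3 := MK2 false true true true.
have m4 := MK3 false true true false.
have m5 := MK1 false false true true.
have m6 := MK2 false false true true.
have m7 := MK3 false false true true.
have m8 := MK1 false true true true.
have m9 := MK3 true false false true.
have m10 := MK1 true false true true.
have m11 := MK2 true false false true.
apply: (arith2 (Hf := fun b1 b2 b3 b4 b5 b6 => entropy p (canon b1 b2 b3 b4 b5 b6))
  eT eB23 eA1 eA2 eA3 eB13 eB12 eI1 eI2 eI3 eI4 m0 m1 m2 m3 m4 m5 m6 m7 m8 m9 m10 m11
  gI1 gI2 gI3 gI4 gA1 gA2 gA3 hC).
Qed.

End Net.

Unset Implicit Arguments.

Theorem mainTheorem2 :
  (forall (R : realType) (X1 X2 X3 Y U1 U2 U3 : finType)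
     (P : X1 * X2 * X3 * Y -> R)
     (W1 : X1 -> U1 -> R) (W2 : X2 -> U2 -> R) (W3 : X3 -> U3 -> R)
     (Delta Csum : R),
     is_pmf P -> is_kernel W1 -> is_kernel W2 -> is_kernel W3 ->
     0 <= Delta -> 0 <= Csum ->
     (cond_i P W1 W2 W3 Delta Csum <-> cond_ii P W1 W2 W3 Delta Csum)) /\
  (forall (R : realType) (X1 X2 X3 Y : finType) (P : X1 * X2 * X3 * Y -> R),
     is_pmf P -> RI_sum P = RII_sum P).
Proof.
split.
  move=> R X1 X2 X3 Y U1 U2 U3 P W1 W2 W3 D C hP h1 h2 h3 _ _.
  exact: (equiv_i_ii hP h1 h2 h3).
move=> R X1 X2 X3 Y P hP.
apply: functional_extensionality => DC; apply: propositional_extensionality.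
split=> -[d1 [d2 [U1 [U2 [U3 [W1 [W2 [W3 [k1 k2 k3 hc]]]]]]]]];
  split=> //; split=> //; exists U1, U2, U3, W1, W2, W3; split => //.
  by apply/(equiv_i_ii hP k1 k2 k3).
by apply/(equiv_i_ii hP k1 k2 k3).
Qed.
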